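(* Let $\mathbb F$ be a field that is not the field with two elements. Let $V\subset\mathbb F^{n\times n}$ and $V'\subset\mathbb F^{n'\times n'}$ be vector spaces of pairwise commuting matrices, each containing a nonsingular matrix. Then the following are equivalent: (i) the Lie algebras $\mathrm L(V)$ and $\mathrm L(V')$ are isomorphic; (ii) $n=n'$ and $SVS^{-1}=V'$ for some nonsingular $S\in\mathbb F^{n\times n}$; (iii) $n=n'$ and $R\widetilde V R^{-1}=\widetilde{V'}$ for some nonsingular $R\in\mathbb F^{(n+1)\times(n+1)}$.
   Context: For a vector space $V\subset\mathbb F^{n\times n}$ of commuting matrices, $\widetilde V$ denotes the vector space of all $(n+1)\times(n+1)$ matrices $(A|a):=\begin{bmatrix}A&a\\0&0\end{bmatrix}$ with $A\in V$, $a\in\mathbb F^n$ (a column), and zero last row. $\mathrm L(V)$ is the Lie algebra $\widetilde V$ with bracket $[u,v]=uv-vu$, i.e. $[(A|a),(B|b)]=(0\,|\,Ab-Ba)$. *)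

(* Defs.v *)
From HB Require Import structures.
From mathcomp Require Import all_boot all_order all_algebra.
Set Implicit Arguments. Unset Strict Implicit. Unset Printing Implicit Defensive.
Import GRing.Theory.
Local Open Scope ring_scope.

Definition commuting_space (F : fieldType) (n : nat) (V : {vspace 'M[F]_n}) :=
  {in V &, forall A B : 'M[F]_n, A *m B = B *m A}.

Definition has_nonsingular (F : fieldType) (n : nat) (V : {vspace 'M[F]_n}) :=
  exists2 A : 'M[F]_n, A \in V & A \in unitmx.

(* Membership in V~ : matrices (A|a) = [A a; 0 0] with A in V, a arbitrary,
   last row zero. *)
Definition in_tilde (F : fieldType) (n : nat) (V : {vspace 'M[F]_n})
  (M : 'M[F]_(n + 1)) : Prop :=
  ulsubmx M \in V /\ dlsubmx M = 0 /\ drsubmx M = 0.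

Definition lie_br (F : fieldType) (m : nat) (u v : 'M[F]_m) : 'M[F]_m :=
  u *m v - v *m u.

(* L(V) and L(V') are isomorphic Lie algebras: there is a linear map which
   restricts to a bijection V~ -> V'~ preserving the bracket. *)
Definition lie_isomorphic (F : fieldType) (n n' : nat)
  (V : {vspace 'M[F]_n}) (V' : {vspace 'M[F]_n'}) : Prop :=
  exists f : {linear 'M[F]_(n + 1) -> 'M[F]_(n' + 1)},
    [/\ forall x, in_tilde V x -> in_tilde V' (f x),
        forall x y, in_tilde V x -> in_tilde V y -> f x = f y -> x = y,
        forall y, in_tilde V' y -> exists2 x, in_tilde V x & f x = y
      & forall x y, in_tilde V x -> in_tilde V y ->
          f (lie_br x y) = lie_br (f x) (f y)].

Definition similar_spaces (F : fieldType) (n n' : nat)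
  (V : {vspace 'M[F]_n}) (V' : {vspace 'M[F]_n'}) : Prop :=
  exists e : n = n',
  exists2 S : 'M[F]_n', S \in unitmx &
    forall B : 'M[F]_n',
      B \in V' <-> exists2 A : 'M[F]_n, A \in V &
                    B = S *m castmx (e, e) A *m invmx S.

Definition similar_tildes (F : fieldType) (n n' : nat)
  (V : {vspace 'M[F]_n}) (V' : {vspace 'M[F]_n'}) : Prop :=
  exists e : n = n',
  exists2 R : 'M[F]_(n' + 1), R \in unitmx &
    forall N : 'M[F]_(n' + 1),
      in_tilde V' N <-> exists2 M : 'M[F]_(n + 1), in_tilde V M &
          N = R *m castmx (congr1 (addn^~ 1%N) e, congr1 (addn^~ 1%N) e) M
                *m invmx R.

(* Main.v *)
Require Import Defs.
From HB Require Import structures.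
From mathcomp Require Import all_boot all_order all_algebra.
Set Implicit Arguments. Unset Strict Implicit. Unset Printing Implicit Defensive.
Import GRing.Theory.
Local Open Scope ring_scope.

Lemma mx_colext (F : fieldType) m k (M N : 'M[F]_(m, k)) :
  (forall b : 'cV[F]_k, M *m b = N *m b) -> M = N.
Proof.
move=> H; apply/matrixP=> i j.
have := congr1 (fun X : 'cV_m => X i 0) (H (delta_mx j 0)).
by rewrite -!colE !mxE.
Qed.

Lemma lin_mx_cV (F : fieldType) m k (T : 'cV[F]_m -> 'cV[F]_k) :
  (forall x y, T (x + y) = T x + T y) -> (forall a x, T (a *: x) = a *: T x) ->
  exists S : 'M[F]_(k, m), forall b, T b = S *m b.
Proof.
move=> TD TZ; exists (\matrix_(i, j) T (delta_mx j 0) i 0) => b.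
have T0 : T 0 = 0 by rewrite -(scale0r (0 : 'cV_m)) TZ scale0r.
have Tsum := big_morph T TD T0.
have -> : b = \sum_j b j 0 *: delta_mx j 0 :> 'cV_m.
  apply/matrixP => i l; rewrite (ord1 l) summxE (bigD1 i) //= big1.
    by rewrite !mxE !eqxx mulr1 addr0.
  by move=> j ji; rewrite !mxE eq_sym (negPf ji) mulr0.
rewrite Tsum; apply/matrixP => i l; rewrite (ord1 l) !mxE summxE.
apply: eq_bigr => j _; rewrite TZ !mxE summxE (bigD1 j) //= big1.
  by rewrite !mxE !eqxx mulr1 addr0 mulrC.
by move=> j' jj; rewrite !mxE; case: eqP => /= [ej|_]; rewrite ?mulr0 //; rewrite -ej eqxx in jj.
Qed.

Section Blocks.
Variables (F : fieldType) (n : nat) (V : {vspace 'M[F]_n}).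

Lemma tilde_block (A : 'M[F]_n) (a : 'cV[F]_n) :
  A \in V -> in_tilde V (block_mx A a 0 0).
Proof. by move=> AV; rewrite /in_tilde block_mxKul block_mxKdl block_mxKdr. Qed.

Lemma tildeP (M : 'M[F]_(n + 1)) :
  in_tilde V M -> exists2 A, A \in V & exists a, M = block_mx A a 0 0.
Proof.
move=> [AV [dl dr]]; exists (ulsubmx M) => //; exists (ursubmx M).
by rewrite -dl -dr submxK.
Qed.

Lemma mul_tblock (A B : 'M[F]_n) (a b : 'cV[F]_n) :
  block_mx A a 0 0 *m block_mx B b 0 0 =
  block_mx (A *m B) (A *m b) 0 0 :> 'M_(n + 1).
Proof. by rewrite mulmx_block !mulmx0 !mul0mx !addr0. Qed.

Lemma lie_tblock (A B : 'M[F]_n) (a b : 'cV[F]_n) :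
  lie_br (block_mx A a 0 0) (block_mx B b 0 0) =
  block_mx (A *m B - B *m A) (A *m b - B *m a) 0 0 :> 'M_(n + 1).
Proof. by rewrite /lie_br !mul_tblock opp_block_mx add_block_mx !oppr0 !addr0. Qed.

End Blocks.

Lemma castmx_refl (F : fieldType) m k (e1 : m = m) (e2 : k = k) (A : 'M[F]_(m, k)) :
  castmx (e1, e2) A = A.
Proof. by rewrite (eq_irrelevance e1 erefl) (eq_irrelevance e2 erefl) castmx_id. Qed.

Lemma i_ii (F : fieldType) (n n' : nat)
  (V : {vspace 'M[F]_n}) (V' : {vspace 'M[F]_n'}) :
  commuting_space V -> commuting_space V' ->
  has_nonsingular V -> has_nonsingular V' ->
  lie_isomorphic V V' -> similar_spaces V V'.
Proof.
move=> cV cV' [A0 A0V A0u] [B0 B0V B0u] [f [ft finj fsurj fbr]].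
have fz : forall b : 'cV[F]_n, exists c,
    f (block_mx 0 b 0 0) = block_mx 0 c 0 0.
  move=> b.
  have -> : block_mx 0 b 0 0 =
      lie_br (block_mx A0 0 0 0) (block_mx 0 (invmx A0 *m b) 0 0) :> 'M_(n + 1).
    by rewrite lie_tblock !mul0mx !mulmx0 subrr subr0 mulKVmx.
  rewrite fbr; try by apply: tilde_block; rewrite ?mem0v.
  have [B1 B1V [c1 ->]] := tildeP (ft _ (tilde_block 0 A0V)).
  have [B2 B2V [c2 ->]] := tildeP (ft _ (tilde_block (invmx A0 *m b) (mem0v V))).
  by rewrite lie_tblock (cV' _ _ B1V B2V) subrr; eexists.
pose T b := ursubmx (f (block_mx 0 b 0 0)).
have fT b : f (block_mx 0 b 0 0) = block_mx 0 (T b) 0 0.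
  by have [c E] := fz b; rewrite /T E block_mxKur.
have TD x y : T (x + y) = T x + T y.
  have := fT (x + y).
  have -> : block_mx 0 (x + y) 0 0 = block_mx 0 x 0 0 + block_mx 0 y 0 0 :> 'M_(n + 1).
    by rewrite add_block_mx !addr0.
  by rewrite linearD /= !fT add_block_mx => /eq_block_mx [_ -> _ _].
have TZ a x : T (a *: x) = a *: T x.
  have := fT (a *: x).
  have -> : block_mx 0 (a *: x) 0 0 = a *: block_mx 0 x 0 0 :> 'M_(n + 1).
    by rewrite scale_block_mx !scaler0.
  by rewrite linearZ /= fT scale_block_mx => /eq_block_mx [_ -> _ _].
have [S TS] := lin_mx_cV TD TZ.
have fS b : f (block_mx 0 b 0 0) = block_mx 0 (S *m b) 0 0 by rewrite fT TS.
have Sinj (b : 'cV_n) : S *m b = 0 -> b = 0.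
  move=> Sb0.
  have : f (block_mx 0 b 0 0) = f (block_mx 0 0 0 0).
    by rewrite !fS Sb0 mulmx0.
  move/finj => /(_ (tilde_block _ (mem0v V)) (tilde_block _ (mem0v V))).
  by move/eq_block_mx => [].
have Ssurj (c : 'cV_n') : exists b, S *m b == c.
  have [x xt fx] := fsurj (block_mx B0 0 0 0) (tilde_block 0 B0V).
  have [y yt fy] := fsurj (block_mx 0 (invmx B0 *m c) 0 0) (tilde_block _ (mem0v V')).
  have [A1 A1V [a1 xE]] := tildeP xt.
  have [A2 A2V [a2 yE]] := tildeP yt.
  have := fbr x y xt yt.
  rewrite fx fy lie_tblock !mul0mx !mulmx0 subrr subr0 mulKVmx //.
  rewrite xE yE lie_tblock (cV _ _ A1V A2V) subrr fS => /eq_block_mx [_ E _ _].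
  by exists (A1 *m a2 - A2 *m a1); rewrite E.
pose B := \matrix_(i, j) (xchoose (Ssurj (delta_mx j 0))) i 0.
have colext m k (M N : 'M[F]_(m, k)) : (forall j, col j M = col j N) -> M = N.
  move=> H; apply/matrixP=> i j.
  by move/(congr1 (fun X : 'cV_m => X i 0)): (H j); rewrite !mxE.
have SB : S *m B = 1%:M.
  apply: colext => j; rewrite col1 colE -mulmxA -colE.
  have -> : col j B = xchoose (Ssurj (delta_mx j 0)).
    by apply/matrixP => i l; rewrite (ord1 l) !mxE.
  exact/eqP/(xchooseP (Ssurj (delta_mx j 0))).
have BS : B *m S = 1%:M.
  apply/eqP; rewrite -subr_eq0; apply/eqP; apply: colext => j.
  rewrite [col j 0]colE mul0mx; apply: Sinj.
  by rewrite colE mulmxA mulmxBr mulmxA SB mul1mx mulmx1 subrr mul0mx.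
have enn : n = n'.
  apply/eqP; rewrite eqn_leq; apply/andP; split.
    rewrite -{1}(mxrank1 F n) -BS.
    exact: leq_trans (mxrankM_maxl _ _) (rank_leq_col _).
  rewrite -{1}(mxrank1 F n') -SB.
  exact: leq_trans (mxrankM_maxl _ _) (rank_leq_col _).
subst n'.
have Su : S \in unitmx by case: (mulmx1_unit SB).
exists erefl; exists S => // Bm.
have key A : A \in V -> exists a, f (block_mx A 0 0 0) =
    block_mx (S *m A *m invmx S) a 0 0 /\ S *m A *m invmx S \in V'.
  move=> AV.
  have [A' A'V [a' fE]] := tildeP (ft _ (tilde_block 0 AV)).
  exists a'; suff -> : S *m A *m invmx S = A' by [].
  apply: (canLR (mulmxK Su)); apply: mx_colext => b.
  have := fbr _ _ (tilde_block 0 AV) (tilde_block b (mem0v V)).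
  rewrite lie_tblock !mul0mx !mulmx0 !subr0 fE !fS lie_tblock !mul0mx !mulmx0 !subr0.
  by case/eq_block_mx => _ E _ _; rewrite -!mulmxA -E.
split.
  move=> BmV.
  have [x xt fx] := fsurj _ (tilde_block 0 BmV).
  have [A AV [a xE]] := tildeP xt.
  exists A => //; rewrite castmx_refl.
  have [a' [fA _]] := key A AV.
  move: fx; rewrite xE.
  have -> : block_mx A a 0 0 = block_mx A 0 0 0 + block_mx 0 a 0 0 :> 'M_(n + 1).
    by rewrite add_block_mx !addr0 add0r.
  by rewrite linearD /= fA fS add_block_mx !addr0 => /eq_block_mx [<-].
case=> A AV ->; rewrite castmx_refl.
by have [a' [_ ?]] := key A AV.
Qed.

Definition conjR (F : fieldType) m (R : 'M[F]_m) (x : 'M[F]_m) := R *m x *m invmx R.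

Lemma conjR_is_linear (F : fieldType) m (R : 'M[F]_m) : linear (conjR R).
Proof. by move=> a x y; rewrite /conjR mulmxDr mulmxDl -scalemxAr -scalemxAl. Qed.

HB.instance Definition _ (F : fieldType) m (R : 'M[F]_m) :=
  GRing.isLinear.Build F 'M[F]_m 'M[F]_m *:%R (conjR R) (conjR_is_linear R).

Lemma iii_i (F : fieldType) (n n' : nat)
  (V : {vspace 'M[F]_n}) (V' : {vspace 'M[F]_n'}) :
  similar_tildes V V' -> lie_isomorphic V V'.
Proof.
move=> [e [R Ru HR]]; subst n'.
exists (conjR R); split.
- by move=> x xt; apply/(HR _).2; exists x => //; rewrite castmx_refl.
- move=> x y _ _ E.
  have K z : invmx R *m conjR R z *m R = z by rewrite /conjR !mulmxA mulmxKV // mulVmx // mul1mx.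
  by rewrite -(K x) E K.
- move=> y /(HR _).1 [M Mt ->]; exists M => //; by rewrite castmx_refl.
- by move=> x y _ _ /=; rewrite /lie_br /conjR mulmxBr mulmxBl !mulmxA !mulmxKV.
Qed.

Lemma ii_iii (F : fieldType) (n n' : nat)
  (V : {vspace 'M[F]_n}) (V' : {vspace 'M[F]_n'}) :
  similar_spaces V V' -> similar_tildes V V'.
Proof.
move=> [e [S Su HS]]; subst n'; exists erefl.
pose R : 'M[F]_(n + 1) := block_mx S 0 0 1%:M.
pose Ri : 'M[F]_(n + 1) := block_mx (invmx S) 0 0 1%:M.
have RRi : R *m Ri = 1%:M.
  by rewrite mulmx_block mulmxV // !mulmx0 !mul0mx !addr0 add0r mul1mx -scalar_mx_block.
have Ru : R \in unitmx by case: (mulmx1_unit RRi).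
have iR : invmx R = Ri by rewrite -[invmx R]mulmx1 -RRi mulmxA mulVmx // mul1mx.
have cj (A : 'M[F]_n) a : R *m block_mx A a 0 0 *m invmx R =
    block_mx (S *m A *m invmx S) (S *m a) 0 0.
  by rewrite iR !mulmx_block !mulmx0 !mul0mx !addr0 !add0r !mulmx1 mul0mx.
exists R => // N; split.
- move=> Nt; have [B BV [c ->]] := tildeP Nt.
  have [A AV EA] := (HS B).1 BV; rewrite castmx_refl in EA.
  exists (block_mx A (invmx S *m c) 0 0); first exact: tilde_block.
  by rewrite cj EA mulKVmx.
- case=> M Mt ->; have [A AV [a ->]] := tildeP Mt; rewrite cj.
  by apply: tilde_block; apply/(HS _).2; exists A => //; rewrite castmx_refl.
Qed.

Unset Implicit Arguments.

Theorem theorem2 (F : fieldType) (n n' : nat)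
  (V : {vspace 'M[F]_n}) (V' : {vspace 'M[F]_n'}) :
  (exists x : F, x != 0 /\ x != 1) ->
  commuting_space V -> commuting_space V' ->
  has_nonsingular V -> has_nonsingular V' ->
  [/\ (lie_isomorphic V V' <-> similar_spaces V V'),
      (similar_spaces V V' <-> similar_tildes V V')
    & (lie_isomorphic V V' <-> similar_tildes V V')].
Proof.
move=> _ cV cV' hV hV'.
have h12 := i_ii cV cV' hV hV'.
have h23 := @ii_iii F n n' V V'.
have h31 := @iii_i F n n' V V'.
by split; split; auto.
Qed.
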